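(* Let $\mathcal{G}=(V,L)$ be a finite connected undirected graph with monitor set $M\subseteq V$ and non-monitor set $N=V\setminus M$, $\sigma=|N|$, and let the measurement paths $P$ be given by Controllable Arbitrary-path Probing (CAP). Let $S\subseteq N$ be nonempty and let $k$ be an integer with $1\le k\le\sigma$. Then $S$ is $k$-identifiable if and only if $\Gamma_{\mathcal{G}^*}(S,m')\ge k$.
   Context: Failure model: a failure set is any $F\subseteq N$ (monitors never fail). A measurement path fails iff it traverses at least one node of $F$. For a set of measurement paths $P$ and $F\subseteq N$, $P_F$ denotes the set of paths in $P$ traversing at least one node of $F$. Two failure sets $F_1,F_2$ are distinguishable iff $P_{F_1}\neq P_{F_2}$. A set $S\subseteq N$ is $k$-identifiable if any two failure sets $F_1,F_2\subseteq N$ with $|F_1|\le k$, $|F_2|\le k$ and $F_1\cap S\neq F_2\cap S$ are distinguishable. Under CAP, $P$ consists of all walks in $\mathcal{G}$ (paths or cycles, repeated nodes and links allowed) that start and end at monitors (possibly the same monitor). $\mathcal{N}(M)$ denotes the set of non-monitors adjacent to at least one monitor. The auxiliary graph $\mathcal{G}^*$ is obtained from $\mathcal{G}$ by deleting all monitors (and their incident links), adding a new virtual node $m'$, and adding a link between $m'$ and every node of $\mathcal{N}(M)$. For nodes $s,t$ of a graph $\mathcal{H}$, the $(s,t)$-vertex-cut $C_{\mathcal{H}}(s,t)$ is a minimum-cardinality set of nodes (other than $s,t$) whose deletion destroys all paths from $s$ to $t$; if $s$ and $t$ are adjacent, $C_{\mathcal{H}}(s,t):=V(\mathcal{H})\setminus\{t\}$.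 For a node set $S$ and a node $m\notin S$, $\Gamma_{\mathcal{H}}(S,m):=\min_{w\in S}|C_{\mathcal{H}}(w,m)|$. *)

(* Defs.v *)
From mathcomp Require Import all_boot.
Set Implicit Arguments. Unset Strict Implicit. Unset Printing Implicit Defensive.

Section Defs.
Variable V : finType.

Definition simple_graph (e : rel V) : Prop := symmetric e /\ irreflexive e.
Definition graph_connected (e : rel V) : Prop := forall x y : V, connect e x y.

Definition nonmon (M : {set V}) : {set V} := ~: M.

(* CAP measurement paths: walks x :: p (consecutive nodes adjacent, repetitions
   allowed) starting and ending at monitors. *)
Definition cap_walk (e : rel V) (M : {set V}) (w : V * seq V) : bool :=
  [&& path e w.1 w.2, w.1 \in M & last w.1 w.2 \in M].

Definition PF (e : rel V) (M : {set V}) (F : {set V}) : pred (V * seq V) :=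
  fun w => cap_walk e M w && has (fun v => v \in F) (w.1 :: w.2).

Definition distinguishable e M (F1 F2 : {set V}) : Prop :=
  ~ (PF e M F1 =1 PF e M F2).

Definition k_identifiable e M (S : {set V}) (k : nat) : Prop :=
  forall F1 F2 : {set V},
    F1 \subset nonmon M -> F2 \subset nonmon M ->
    #|F1| <= k -> #|F2| <= k -> F1 :&: S != F2 :&: S ->
    distinguishable e M F1 F2.

Definition nbrM e (M : {set V}) : {set V} :=
  [set v in nonmon M | [exists m in M, e v m]].

(* Auxiliary graph G*: vertices Some v (v in N) and the virtual node None = m'. *)
Definition star_vertices (M : {set V}) : {set option V} :=
  None |: [set Some v | v in nonmon M].

Definition star_rel e (M : {set V}) : rel (option V) :=
  fun x y => match x, y with
  | Some a, Some b => [&& e a b, a \in nonmon M & b \in nonmon M]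
  | None, Some b => b \in nbrM e M
  | Some a, None => a \in nbrM e M
  | None, None => false
  end.
End Defs.

(* General graph H with vertex set D inside a finType T and adjacency h. *)
Section Cut.
Variable T : finType.

Definition separates (D : {set T}) (h : rel T) (X : {set T}) (s t : T) : bool :=
  ~~ connect [rel x y | [&& h x y, x \in D :\: X & y \in D :\: X]] s t.

(* |C_H(s,t)|: minimum size of an (s,t)-vertex-cut (nodes of H other than
   s, t); by convention |V(H) \ {t}| if s and t are adjacent. *)
Definition vcut_size (D : {set T}) (h : rel T) (s t : T) : nat :=
  if h s t then #|D :\ t|
  else \big[minn/#|D|]_(X : {set T} | (X \subset D :\: [set s; t]) && separates D h X s t) #|X|.

Definition Gamma (D : {set T}) (h : rel T) (S : {set T}) (m : T) : nat :=
  \big[minn/#|D|]_(w in S) vcut_size D h w m.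
End Cut.

(* Main.v *)
Require Import Defs.
From mathcomp Require Import all_boot.
Set Implicit Arguments. Unset Strict Implicit. Unset Printing Implicit Defensive.

Lemma bigmin_le (I : eqType) (r : seq I) (P : pred I) (F : I -> nat) idx j :
  j \in r -> P j -> \big[minn/idx]_(i <- r | P i) F i <= F j.
Proof.
elim: r => // a r IH; rewrite inE big_cons => /orP[/eqP <-|jr] Pj.
  by rewrite Pj geq_minl.
case: ifP => _; last exact: IH.
by rewrite geq_min IH ?orbT.
Qed.

Definition rst (V : finType) (e : rel V) (M : {set V}) (X : {set option V}) :
  rel (option V) :=
  [rel x y | [&& star_rel e M x y, x \in star_vertices M :\: X
                                 & y \in star_vertices M :\: X]].

Lemma Some_in_D (V : finType) (M : {set V}) v :
  (Some v \in star_vertices M) = (v \in nonmon M).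
Proof. by rewrite /star_vertices in_setU1 /= (mem_imset _ _ Some_inj). Qed.

Lemma None_in_D (V : finType) (M : {set V}) : None \in star_vertices M.
Proof. by rewrite /star_vertices in_setU1 eqxx. Qed.

Lemma inv_walk (V : finType) (e : rel V) (M : {set V}) (X : {set option V}) x p :
  symmetric e -> None \notin X ->
  path e x p -> (x \in M) || connect (rst e M X) (Some x) None ->
  all (fun y => Some y \notin X) (x :: p) ->
  forall y, y \in x :: p -> (y \in M) || connect (rst e M X) (Some y) None.
Proof.
move=> esym NX; elim: p x => [|a p IH] x /=.
  by move=> _ Hx _ y; rewrite inE => /eqP ->.
move=> /andP[exa pth] Hx /and3P[xX aX allp] y.
rewrite inE => /orP[/eqP -> //|yin].
apply: (IH a) => //; last by rewrite /= aX.
case aM: (a \in M) => //=.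
have aN : a \in nonmon M by rewrite /nonmon in_setC aM.
case xM: (x \in M) Hx => /= Hx.
  apply: connect1; rewrite /rst /= !in_setD aX Some_in_D aN NX None_in_D andbT.
  rewrite /nbrM in_set aN andbT /=; apply/existsP; exists x; by rewrite xM esym.
apply: connect_trans Hx; apply: connect1.
have xN : x \in nonmon M by rewrite /nonmon in_setC xM.
by rewrite /rst /= !in_setD aX xX !Some_in_D aN xN esym exa.
Qed.

Lemma card_D_ge (V : finType) (M : {set V}) :
  #|nonmon M| <= #|star_vertices M :\ None|.
Proof.
rewrite -(card_imset _ Some_inj); apply: subset_leq_card.
apply/subsetP => _ /imsetP[v vN ->].
by rewrite in_setD1 /= Some_in_D.
Qed.

Lemma card_D_ge' (V : finType) (M : {set V}) :
  #|nonmon M| <= #|star_vertices M|.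
Proof.
apply: leq_trans (card_D_ge M) _; apply: subset_leq_card; exact: subsetDl.
Qed.

Lemma forward (V : finType) (e : rel V) (M S : {set V}) (k : nat) :
  symmetric e -> S \subset nonmon M -> k <= #|nonmon M| ->
  k_identifiable e M S k ->
  k <= Gamma (star_vertices M) (star_rel e M) (Some @: S) None.
Proof.
move=> esym SN kN kid.
have kD : k <= #|star_vertices M| := leq_trans kN (card_D_ge' M).
rewrite /Gamma; apply: (big_ind (fun x => k <= x)) => //.
  by move=> x y; rewrite leq_min => -> ->.
move=> i /imsetP[w wS ->].
have wN : w \in nonmon M := subsetP SN w wS.
rewrite /vcut_size; case: ifP => adj.
  exact: leq_trans kN (card_D_ge M).
apply: (big_ind (fun x => k <= x)) => //.
  by move=> x y; rewrite leq_min => -> ->.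
move=> X /andP[Xsub sep]; rewrite leqNgt; apply/negP => Xk.
set C := [set v | Some v \in X].
have CX : #|C| <= #|X|.
  rewrite -(card_imset _ Some_inj); apply: subset_leq_card.
  by apply/subsetP => y /imsetP[v]; rewrite inE => vX ->.
have XD : forall x, x \in X -> x \in star_vertices M :\: [set Some w; None].
  by move=> x; apply: (subsetP Xsub).
have CN : C \subset nonmon M.
  apply/subsetP => v; rewrite inE => /XD; rewrite in_setD => /andP[_].
  by rewrite Some_in_D.
have wC : w \notin C.
  rewrite inE; apply/negP => /XD; by rewrite in_setD !inE eqxx.
have NX : None \notin X.
  apply/negP => /XD; by rewrite in_setD !inE eqxx orbT.
have := kid C (w |: C) CN _ _ _ _.
case.
- by rewrite subUset sub1set wN CN.
- exact: leq_trans CX (ltnW Xk).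
- by rewrite cardsU1 wC add1n; exact: leq_ltn_trans CX Xk.
- apply/eqP => h.
  have : w \in (w |: C) :&: S by rewrite !inE eqxx wS.
  by rewrite -h in_setI (negbTE wC).
move=> [x p]; rewrite /PF; case cw: (cap_walk e M (x, p)) => //; change (has (fun v => v \in C) (x :: p) = has (fun v => v \in w |: C) (x :: p)).
case/and3P: cw => pth xM _; rewrite /= in pth xM.
case hC: (has (fun v => v \in C) (x :: p)).
  symmetry; apply/hasP; case/hasP: hC => y yin yC; exists y => //.
  by rewrite in_setU1 yC orbT.
symmetry; apply/negbTE/hasPn => y yin.
have yC : y \notin C by move/negbT/hasPn: hC => /(_ y yin).
rewrite in_setU1 (negbTE yC) orbF; apply/eqP => yw; subst y.
have all' : all (fun y => Some y \notin X) (x :: p).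
  apply/allP => z zin; move/negbT/hasPn: hC => /(_ z zin).
  by rewrite inE.
have := @inv_walk V e M X x p esym NX pth (ltac:(by rewrite xM)) all' w yin.
case/orP.
  by move: wN; rewrite /nonmon in_setC => /negbTE ->.
by move: sep; rewrite /separates => /negbTE; rewrite /rst => ->.
Qed.

Definition r1 (V : finType) (e : rel V) (F : {set V}) : rel V :=
  fun a b => [&& e a b, a \notin F & b \notin F].

Definition reach (V : finType) (e : rel V) (M F : {set V}) : {set V} :=
  [set u | [exists m in M, connect (r1 e F) m u]].

Lemma r1_sym (V : finType) (e : rel V) (F : {set V}) : symmetric e -> symmetric (r1 e F).
Proof. by move=> es a b; rewrite /r1 es; case: (e b a) => //=; apply: andbC. Qed.

Lemma r1_path_notF (V : finType) (e : rel V) (F : {set V}) x p :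
  x \notin F -> path (r1 e F) x p -> all (fun y => y \notin F) (x :: p).
Proof.
elim: p x => [|a p IH] x /=; first by move=> ->.
by move=> -> /andP[/and3P[_ _ aF] pth]; exact: IH.
Qed.

Lemma notF_M (V : finType) (M F : {set V}) m :
  F \subset nonmon M -> m \in M -> m \notin F.
Proof.
move=> FN mM; apply/negP => /(subsetP FN); by rewrite /nonmon in_setC mM.
Qed.

Lemma reach_notF (V : finType) (e : rel V) (M F : {set V}) u :
  F \subset nonmon M -> u \in reach e M F -> u \notin F.
Proof.
move=> FN; rewrite inE => /existsP[m /andP[mM /connectP[p pth ->]]].
have := r1_path_notF (notF_M FN mM) pth => /allP; apply; exact: mem_last.
Qed.

Lemma reach_walk (V : finType) (e : rel V) (M F1 F2 : {set V}) u :
  symmetric e -> F1 \subset nonmon M ->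
  PF e M F1 =1 PF e M F2 -> u \in reach e M F1 -> u \notin F2.
Proof.
move=> es F1N H; rewrite inE => /existsP[m /andP[mM c]].
have c' : connect (r1 e F1) u m by rewrite (sym_connect_sym (r1_sym F1 es)).
case/connectP: c => p1 pth1 def_u.
case/connectP: c' => p2 pth2 def_m.
have sub : subrel (r1 e F1) e by move=> a b /andP[].
have cw : cap_walk e M (m, p1 ++ p2).
  rewrite /cap_walk /= cat_path (sub_path sub pth1) -def_u (sub_path sub pth2).
  by rewrite last_cat -def_u -def_m mM.
have nF1 : all (fun y => y \notin F1) (m :: p1 ++ p2).
  have := r1_path_notF (notF_M F1N mM) pth1; rewrite /= => /andP[-> a1].
  rewrite all_cat a1 /=.
  have : u \notin F1 by rewrite def_u; apply: (allP (r1_path_notF (notF_M F1N mM) pth1)); exact: mem_last.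
  by move=> uF; have := r1_path_notF uF pth2 => /andP[].
have := H (m, p1 ++ p2); rewrite /PF cw !andTb.
have -> : has (fun v => v \in F1) (m :: p1 ++ p2) = false.
  by apply/negbTE/hasPn => y /(allP nF1).
move/esym/negbT/hasPn; apply.
by rewrite -cat_cons mem_cat def_u mem_last.
Qed.

Lemma B_sub (V : finType) (e : rel V) (M F1 F2 : {set V}) y z :
  symmetric e -> F1 \subset nonmon M ->
  PF e M F1 =1 PF e M F2 -> y \in F1 -> z \in reach e M F1 -> e z y ->
  y \in F2.
Proof.
move=> es F1N H yF1 zR ezy.
move: (zR); rewrite inE => /existsP[m /andP[mM c]].
have c' : connect (r1 e F1) z m by rewrite (sym_connect_sym (r1_sym F1 es)).
case/connectP: (c) => p1 pth1 def_z.
case/connectP: (c') => p2 pth2 def_m.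
have sub : subrel (r1 e F1) e by move=> a b /andP[].
have cw : cap_walk e M (m, p1 ++ y :: z :: p2).
  rewrite /cap_walk /= cat_path (sub_path sub pth1) -def_z /= ezy (es y z) ezy.
  by rewrite (sub_path sub pth2) last_cat -def_z /= -def_m mM.
have inR : forall u, u \in (m :: p1) ++ (z :: p2) -> u \in reach e M F1.
  move=> u; rewrite mem_cat => /orP[uin|uin]; rewrite inE; apply/existsP;
    exists m; rewrite mM /=.
    exact: (path_connect pth1).
  apply: connect_trans c _; exact: (path_connect pth2).
have := H (m, p1 ++ y :: z :: p2); rewrite /PF cw !andTb.
have -> : has (fun v => v \in F1) (m :: p1 ++ y :: z :: p2).
  by apply/hasP; exists y => //; rewrite -cat_cons mem_cat !inE eqxx orbT.
move/esym/hasP => [u uin uF2].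
case: (eqVneq u y) => [<- //|uy].
have : u \in reach e M F1.
  apply: inR; move: uin; rewrite /= -cat_cons !mem_cat (in_cons y) (negbTE uy) /=.
  by rewrite -cat_cons mem_cat.
by move/(reach_walk es F1N H); rewrite uF2.
Qed.

Definition bnd (V : finType) (e : rel V) (M F1 : {set V}) : {set V} :=
  [set y in F1 | [exists z in reach e M F1, e z y]].

Definition good (V : finType) (e : rel V) (M F1 : {set V}) (x : option V) :=
  if x is Some v then v \in reach e M F1 else true.

Lemma good_step (V : finType) (e : rel V) (M F1 : {set V}) a b :
  symmetric e -> F1 \subset nonmon M ->
  rst e M (Some @: bnd e M F1) a b -> good e M F1 b -> good e M F1 a.
Proof.
move=> es F1N; case: a => [v|] //=.
rewrite /rst /= !in_setD (mem_imset _ _ Some_inj) Some_in_D.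
case/and3P => hvb /andP[vB vN] /andP[_ _] gb.
case vF: (v \in F1).
  exfalso; move/negP: vB; apply; rewrite inE vF /=.
  case: b hvb gb => [u|] /=.
    move=> /and3P[evu _ _] uR; apply/existsP; exists u; by rewrite uR es.
  rewrite /nbrM in_set => /andP[_ /existsP[m /andP[mM evm]]] _.
  apply/existsP; exists m; rewrite es evm andbT inE.
  by apply/existsP; exists m; rewrite mM connect0.
case: b hvb gb => [u|] /=.
  move=> /and3P[evu _ _] uR.
  have uF : u \notin F1 by apply: (reach_notF (e:=e) F1N).
  move: uR; rewrite !inE => /existsP[m /andP[mM c]].
  apply/existsP; exists m; rewrite mM /=; apply: connect_trans c _.
  by apply: connect1; rewrite /r1 es evu vF uF.
rewrite /nbrM in_set => /andP[_ /existsP[m /andP[mM evm]]] _.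
rewrite inE; apply/existsP; exists m; rewrite mM /=; apply: connect1.
by rewrite /r1 es evm vF (notF_M F1N mM).
Qed.

Lemma good_conn (V : finType) (e : rel V) (M F1 : {set V}) a :
  symmetric e -> F1 \subset nonmon M ->
  connect (rst e M (Some @: bnd e M F1)) a None -> good e M F1 a.
Proof.
move=> es F1N /connectP[p pth def].
suff : good e M F1 (last a p) -> good e M F1 a by rewrite -def; apply.
elim: p a pth {def} => [|c p IH] a //= /andP[rac pth] g.
exact: (good_step es F1N rac (IH c pth g)).
Qed.

Lemma key (V : finType) (e : rel V) (M S F1 F2 : {set V}) (k : nat) w :
  symmetric e -> S \subset nonmon M -> F1 \subset nonmon M ->
  k <= Gamma (star_vertices M) (star_rel e M) (Some @: S) None ->
  #|F2| <= k -> w \in S -> w \in F2 -> w \notin F1 ->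
  PF e M F1 =1 PF e M F2 -> False.
Proof.
move=> es SN F1N kG F2k wS wF2 wF1 H.
have wN : w \in nonmon M := subsetP SN w wS.
have wR : w \notin reach e M F1.
  by apply/negP => /(reach_walk es F1N H); rewrite wF2.
set B := bnd e M F1.
have BF2 : B \subset F2.
  apply/subsetP => y; rewrite inE => /andP[yF1 /existsP[z /andP[zR ezy]]].
  exact: (B_sub es F1N H yF1 zR ezy).
have wB : w \notin B by rewrite inE (negbTE wF1).
have sep : separates (star_vertices M) (star_rel e M) (Some @: B) (Some w) None.
  rewrite /separates; apply/negP => c.
  have := @good_conn V e M F1 (Some w) es F1N c; by rewrite /= (negbTE wR).
have nadj : star_rel e M (Some w) None = false.
  apply/negbTE/negP => adj.
  have r : rst e M (Some @: B) (Some w) None.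
    move: adj; rewrite /= => adj; rewrite /rst /= adj !in_setD (mem_imset _ _ Some_inj) wB Some_in_D wN.
    rewrite None_in_D !andbT; apply/negP => /imsetP[y _]; discriminate.
  have := @good_step V e M F1 _ _ es F1N r isT; by rewrite /= (negbTE wR).
have Xsub : Some @: B \subset star_vertices M :\: [set Some w; None].
  apply/subsetP => x /imsetP[y yB ->].
  rewrite in_setD Some_in_D in_set2 /=.
  have yF1 : y \in F1 by move: yB; rewrite inE => /andP[].
  rewrite (subsetP F1N y yF1) andbT.
  by apply/negP => /orP[/eqP [yw]|//]; move: yB; rewrite yw (negbTE wB).
have vc : vcut_size (star_vertices M) (star_rel e M) (Some w) None <= #|B|.
  rewrite /vcut_size nadj.
  apply: (leq_trans (bigmin_le _ _ (mem_index_enum (Some @: B)) _)).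
    by rewrite Xsub sep.
  by rewrite (card_imset _ Some_inj).
have gv : Gamma (star_vertices M) (star_rel e M) (Some @: S) None <=
          vcut_size (star_vertices M) (star_rel e M) (Some w) None.
  rewrite /Gamma; apply: (bigmin_le _ _ (mem_index_enum _)).
  by rewrite (mem_imset _ _ Some_inj).
have : #|w |: B| <= #|F2| by apply: subset_leq_card; rewrite subUset sub1set wF2 BF2.
rewrite cardsU1 wB add1n => lt.
have := leq_trans (leq_trans kG (leq_trans gv vc)) (leq_trans (ltnW lt) F2k).
move: (leq_trans lt F2k) => lt2 le2.
by have := leq_ltn_trans (leq_trans kG (leq_trans gv vc)) (leq_trans lt F2k); rewrite ltnn.
Qed.

Theorem theorem1 (V : finType) (e : rel V) (M : {set V}) (S : {set V}) (k : nat) :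
  simple_graph e -> graph_connected e ->
  S \subset nonmon M -> S != set0 ->
  1 <= k <= #|nonmon M| ->
  (k_identifiable e M S k <->
   k <= Gamma (star_vertices M) (star_rel e M) (Some @: S) None).
Proof.
move=> [es _] _ SN _ /andP[_ kN]; split; first exact: forward.
move=> kG F1 F2 F1N F2N c1 c2 neq H.
case: (pickP [pred w | (w \in S) && ((w \in F1) != (w \in F2))]) => [w|none].
  case/andP => wS; case F1w: (w \in F1); case F2w: (w \in F2) => //= _.
    exact: (key es SN F2N kG c1 wS F1w (negbT F2w) (fun x => esym (H x))).
  exact: (key es SN F1N kG c2 wS F2w (negbT F1w) H).
move/negP: neq; apply; apply/eqP/setP => w; rewrite !in_setI.
case wS: (w \in S); rewrite ?andbF //.
by have := none w; rewrite /= wS /= => /negbFE/eqP ->.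
Qed.
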